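(* Let $\bar A\in\mathbb{R}^{n\times n}$ be Hurwitz, $\bar Q=\bar Q^T\succeq0$, and consider $\dot{\mathbf{x}}=\bar A\mathbf{x}$, $\mathbf{x}(t_0)=\mathbf{x}_0$, with cost $J=\int_{t_0}^\infty\mathbf{x}^T\bar Q\mathbf{x}\,dt$. For $Y\in\mathbb{R}^{n\times n}$ (Krotov function $q=\mathbf{x}^TY\mathbf{x}$) define $J_{eq}(Y)=\mathbf{x}_0^TY\mathbf{x}_0+\int_{t_0}^\infty\mathbf{x}(t)^T(\bar A^TY+Y\bar A+\bar Q)\mathbf{x}(t)\,dt$, where $\mathbf{x}(t)$ is the solution of the system. Let $Y^*$ be the solution of $\bar A^TY+Y\bar A+\bar Q=0$ and $J^*=\mathbf{x}_0^TY^*\mathbf{x}_0$. Then (1) for every symmetric $Y\succeq0$, $J_{eq}(Y)\ge J^*$; (2) if $t_0=0$, then $J_{eq}(Y)=J^*$ for every matrix $Y$.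
   Context: $J_{eq}(Y)$ is the Krotov-equivalent form of the cost for $q(\mathbf{x})=\mathbf{x}^TY\mathbf{x}$: $q(\mathbf{x}_0)+\int s\,dt$ with $s=\frac{\partial q}{\partial\mathbf{x}}\bar A\mathbf{x}+\mathbf{x}^T\bar Q\mathbf{x}$ (the terminal term vanishes since $\mathbf{x}(t)\to0$). *)

(* Defs.v *)
From HB Require Import structures.
From mathcomp Require Import all_boot all_order all_algebra.
From mathcomp Require Import all_classical all_reals.
From mathcomp Require Import topology normedtype derive measure lebesgue_measure lebesgue_integral.
From mathcomp Require Import complex.
Set Implicit Arguments. Unset Strict Implicit. Unset Printing Implicit Defensive.
Import Order.TTheory GRing.Theory Num.Theory.
Import numFieldNormedType.Exports.
Local Open Scope ring_scope.

Definition qform (R : realType) (n : nat) (M : 'M[R]_n) (v : 'cV[R]_n) : R :=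
  (v^T *m M *m v) 0 0.

Definition psd (R : realType) (n : nat) (M : 'M[R]_n) : Prop :=
  M^T = M /\ forall v : 'cV[R]_n, 0 <= qform M v.

Definition hurwitz (R : realType) (n : nat) (A : 'M[R]_n) : Prop :=
  forall z : R[i], root (map_poly (real_complex R) (char_poly A)) z -> Re z < 0.

Definition J_eq (R : realType) (n : nat) (A Q Y : 'M[R]_n) (x : R -> 'cV[R]_n)
  (t0 : R) : \bar R :=
  ((qform Y (x t0))%:E +
   \int[lebesgue_measure]_(t in `[t0, +oo[%classic)
      (qform (A^T *m Y + Y *m A + Q) (x t))%:E)%E.

(* Main.v *)
Require Import Defs.
From HB Require Import structures.
From mathcomp Require Import all_boot all_order all_algebra.
From mathcomp Require Import all_classical all_reals.
From mathcomp Require Import topology normedtype derive measure lebesgue_measure lebesgue_integral.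
From mathcomp Require Import complex.
From mathcomp Require Import sequences.
From mathcomp.analysis Require Import exp ftc realfun measurable_realfun.
From mathcomp Require Import ring lra.
Import Order.TTheory GRing.Theory Num.Theory.
Import numFieldNormedType.Exports.
Set Implicit Arguments. Unset Strict Implicit. Unset Printing Implicit Defensive.
Local Open Scope ring_scope.

Section QF.
Variables (R : realType) (n : nat).
Implicit Types (M N P S : 'M[R]_n) (u v w : 'cV[R]_n).

Definition bil M u w : R := (u^T *m M *m w) 0 0.

Lemma bilE M u w : bil M u w = \sum_(i < n) \sum_(j < n) u i 0 * M i j * w j 0.
Proof.
rewrite /bil mxE exchange_big /=; apply: eq_bigr => i _.
rewrite mxE big_distrl /=; apply: eq_bigr => j _; by rewrite !mxE.
Qed.

Lemma qformE M v : qform M v = bil M v v. Proof. by []. Qed.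

Lemma bilD M N u w : bil (M + N) u w = bil M u w + bil N u w.
Proof. by rewrite /bil mulmxDr mulmxDl mxE. Qed.

Lemma bilN M u w : bil (- M) u w = - bil M u w.
Proof. by rewrite /bil mulmxN mulNmx mxE. Qed.

Lemma bilZ (k : R) M u w : bil (k *: M) u w = k * bil M u w.
Proof. by rewrite /bil -scalemxAr -scalemxAl mxE. Qed.

Lemma bil_trl P M u w : bil (P^T *m M) u w = bil M (P *m u) w.
Proof. by rewrite /bil trmx_mul !mulmxA. Qed.

Lemma bil_mr P M u w : bil (M *m P) u w = bil M u (P *m w).
Proof. by rewrite /bil !mulmxA. Qed.

Lemma bil_gram P u w : bil (P^T *m P) u w = \sum_(i < n) (P *m u) i 0 * (P *m w) i 0.
Proof.
rewrite bil_trl /bil -mulmxA mxE; apply: eq_bigr => i _; by rewrite !mxE.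
Qed.

End QF.

Section Deriv.
Variables (R : realType) (n : nat) (A : 'M[R]_n) (x : R -> 'cV[R]_n).
Hypothesis hx : forall t : R, is_derive t 1 x (A *m x t).

Lemma dcoord (t : R) (i : 'I_n) (j : 'I_1) : is_derive t (1:R) (fun s => x s i j) ((A *m x t) i j).
Proof.
have hd := hx t.
have dx : derivable x t 1 by exact: ex_derive.
have dij := (derivable_mxP x t 1).1 dx i j.
apply: DeriveDef => //.
have h := derive_mx dx; rewrite derive_val in h.
move/matrixP: h => /(_ i j); rewrite [in X in _ = X -> _]mxE => ->; by [].
Qed.

Lemma dqform (M : 'M[R]_n) (t : R) : is_derive t (1:R) (fun s => qform M (x s))
  (bil M (A *m x t) (x t) + bil M (x t) (A *m x t)).
Proof.
have -> : (fun s => qform M (x s)) =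
   \sum_(i < n) (fun s => \sum_(j < n) (M i j *: ((fun s => x s i 0) * (fun s => x s j 0))) s).
  apply/funext => s; rewrite fct_sumE qformE bilE; apply: eq_bigr => i _.
  apply: eq_bigr => j _ /=; change (x s i 0 * M i j * x s j 0 = M i j * (x s i 0 * x s j 0)); ring.
apply: is_derive_eq.
  apply: is_derive_sum => i; rewrite -fct_sumE; apply: is_derive_sum => j.
  apply: is_deriveZ; apply: is_deriveM; exact: dcoord.
rewrite !bilE -big_split /=; apply: eq_bigr => i _; rewrite -big_split /=.
apply: eq_bigr => j _ /=; rewrite /GRing.scale /=; ring.
Qed.

End Deriv.

Section Key.
Variables (R : realType) (n : nat) (A : 'M[R]_n).

Definition Gp (P S : 'M[R]_n) := P^T *m P + S^T *m S.
Definition step (al be : R) (PS : 'M[R]_n * 'M[R]_n) : 'M[R]_n * 'M[R]_n :=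
  (PS.1 *m A - al *: PS.1 + be *: PS.2, PS.2 *m A - al *: PS.2 - be *: PS.1).

Lemma qform_Gp P S v : qform (Gp P S) v =
  \sum_(i < n) ((P *m v) i 0 ^+ 2 + (S *m v) i 0 ^+ 2).
Proof. by rewrite qformE bilD !bil_gram -big_split /=; apply: eq_bigr => i _; rewrite !expr2. Qed.

Lemma Gp_ge0 P S v : 0 <= qform (Gp P S) v.
Proof. by rewrite qform_Gp; apply: sumr_ge0 => i _; rewrite addr_ge0 // sqr_ge0. Qed.

Lemma key (al be : R) P S v : al < 0 ->
  bil (Gp P S) (A *m v) v + bil (Gp P S) v (A *m v) <=
  al * qform (Gp P S) v - al^-1 * qform (Gp (step al be (P, S)).1 (step al be (P, S)).2) v.
Proof.
move=> al0.
have al0' : al != 0 by rewrite lt_eqF.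
rewrite !qform_Gp /Gp !bilD !bil_gram /step /=.
pose p i := (P *m v) i 0.
pose s i := (S *m v) i 0.
pose pa i := (P *m (A *m v)) i 0.
pose sa i := (S *m (A *m v)) i 0.
have E1 i : ((P *m A - al *: P + be *: S) *m v) i 0 = pa i - al * p i + be * s i.
  by rewrite mulmxDl mulmxBl -!scalemxAl -mulmxA /pa /p /s !mxE.
have E2 i : ((S *m A - al *: S - be *: P) *m v) i 0 = sa i - al * s i - be * p i.
  by rewrite mulmxBl mulmxBl -!scalemxAl -mulmxA /sa /p /s !mxE.
pose F i := (- al^-1) * ((al * p i + (pa i - al * p i + be * s i)) ^+ 2
                                     + (al * s i + (sa i - al * s i - be * p i)) ^+ 2).
have E i : F i = (al * ((P *m v) i 0 ^+ 2 + (S *m v) i 0 ^+ 2) - al^-1 *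
       (((P *m A - al *: P + be *: S) *m v) i 0 ^+ 2 + ((S *m A - al *: S - be *: P) *m v) i 0 ^+ 2))
    - ((P *m (A *m v)) i 0 * (P *m v) i 0 + (S *m (A *m v)) i 0 * (S *m v) i 0 +
       ((P *m v) i 0 * (P *m (A *m v)) i 0 + (S *m v) i 0 * (S *m (A *m v)) i 0)).
  rewrite E1 E2 /F /p /s /pa /sa; field.
  by [].
rewrite -subr_ge0; match goal with |- is_true (0 <= ?X) => have -> : X = \sum_(i < n) F i end.
  rewrite (eq_bigr _ (fun i _ => E i)) sumrB !big_split /= -!mulr_sumr.
  rewrite sumrN -mulr_sumr !big_split /=. by [].
apply: sumr_ge0 => i _; apply: mulr_ge0; last by rewrite addr_ge0 // sqr_ge0.
by rewrite oppr_ge0 invr_le0 ltW.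
Qed.

End Key.
Section Expo.
Variable R : realType.

Lemma dexp (k t0 t : R) : is_derive t (1:R) (fun s => expR (k * (s - t0))) (k * expR (k * (t - t0))).
Proof.
pose f := fun s : R => k * (s - t0).
have df : is_derive t (1:R) f k.
  have h1 : is_derive t (1:R) (fun s : R => s - t0) (1 - 0) :=
    is_deriveB (is_derive_id t 1) (is_derive_cst t0 t 1).
  have h2 : is_derive t (1:R) (fun s : R => k * (s - t0)) (k *: (1 - 0)) :=
    is_deriveZ k h1.
  by rewrite subr0 /GRing.scale /= mulr1 in h2.
have dc : derivable (expR \o f) t 1.
  apply/derivable1_diffP; apply: differentiable_comp; apply/derivable1_diffP.
    exact: ex_derive.
  exact: derivable_expR.
apply: DeriveDef => //.
rewrite -derive1E derive1_comp; [|exact: ex_derive|exact: derivable_expR].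
rewrite !derive1E (@derive_val _ _ _ _ _ _ _ (is_derive_expR _)) (@derive_val _ _ _ _ _ _ _ df) mulrC.
by [].
Qed.

Lemma continuous_of_derive (H : R -> R) (dH : R -> R) :
  (forall t, is_derive t (1:R) H (dH t)) -> continuous H.
Proof.
move=> hd t; apply: differentiable_continuous; apply/derivable1_diffP.
have h := hd t; exact: ex_derive.
Qed.

Lemma nonincr (H dH : R -> R) (a b : R) :
  (forall t, is_derive t (1:R) H (dH t)) -> (forall t, a <= t -> dH t <= 0) ->
  a <= b -> H b <= H a.
Proof.
move=> hd hle ab.
have [c cab E] := @MVT_segment R H dH a b ab (fun t _ => hd t)
   (continuous_subspaceT (continuous_of_derive hd)).
rewrite -subr_le0 E mulr_le0_ge0 // ?subr_ge0 //.
by apply: hle; move: cab; rewrite in_itv /= => /andP[].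
Qed.

End Expo.

Section Decay.
Variables (R : realType) (n : nat) (A : 'M[R]_n) (x : R -> 'cV[R]_n) (t0 : R).
Hypothesis hx : forall t : R, is_derive t 1 x (A *m x t).

Definition w (PS : 'M[R]_n * 'M[R]_n) t := qform (Gp PS.1 PS.2) (x t).
Definition Decay PS := exists C c : R, 0 < c /\
  forall t, t0 <= t -> w PS t <= C * expR (- c * (t - t0)).

Lemma step_decay al be PS : al < 0 -> Decay (step A al be PS) -> Decay PS.
Proof.
case: PS => P S.
move=> al0 [C [c [c0 hC]]].
pose a := - al.
have a0 : 0 < a by rewrite /a oppr_gt0.
pose c' := Num.min a c / 2.
have c'0 : 0 < c' by rewrite /c' divr_gt0 // lt_min a0 c0.
have c'a : c' < a.
  have : Num.min a c <= a by rewrite ge_min lexx.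
  rewrite /c'; lra.
have c'c : c' < c.
  have : Num.min a c <= c by rewrite ge_min lexx orbT.
  rewrite /c'; lra.
pose d := c - c'.
have d0 : 0 < d by rewrite /d subr_gt0.
have C0 : 0 <= C.
  have := hC t0 (lexx _); rewrite subrr mulr0 expR0 mulr1.
  by apply: le_trans; exact: Gp_ge0.
pose ia := - al^-1.
have ia0 : 0 < ia by rewrite /ia oppr_gt0 invr_lt0.
pose K := C * ia / d.
have K0 : 0 <= K by rewrite /K divr_ge0 ?mulr_ge0 // ltW.
have Kd : K * d = C * ia by rewrite /K divfK // gt_eqF.
pose G := Gp P S.
pose fE := fun s : R => expR (c' * (s - t0)).
pose fW := fun s : R => qform G (x s).
pose fF := fun s : R => expR (- d * (s - t0)).
pose H := fE * fW + K \*: fF.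
pose dW := fun t => bil G (A *m x t) (x t) + bil G (x t) (A *m x t).
pose dH := fun t => fE t *: dW t + fW t *: (c' * fE t) + K *: (- d * fF t).
have hH t : is_derive t (1:R) H (dH t).
  have h_e : is_derive t (1:R) fE (c' * fE t) := dexp c' t0 t.
  have h_w : is_derive t (1:R) fW (dW t) := dqform hx G t.
  have h_f : is_derive t (1:R) fF (- d * fF t) := dexp (- d) t0 t.
  exact: is_deriveD (is_deriveM h_e h_w) (is_deriveZ K h_f).
have dH0 t : t0 <= t -> dH t <= 0.
  move=> tt0.
  have hk := key A be P S (x t) al0.
  have hv := hC t tt0.
  rewrite /w /= in hv.
  set v := qform (Gp (step A al be (P, S)).1 (step A al be (P, S)).2) (x t) in hk hv.
  have E0 : 0 < fE t by exact: expR_gt0.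
  have F0 : 0 < fF t by exact: expR_gt0.
  have W0 : 0 <= fW t by exact: Gp_ge0.
  have EG : fE t * expR (- c * (t - t0)) = fF t.
    by rewrite /fE /fF -expRD /d; congr expR; ring.
  have h1 : fE t * dW t <= fE t * (al * fW t + ia * v).
    rewrite ler_pM2l //; move: hk; rewrite /dW /fW /ia /G; lra.
  have h2 : (c' + al) * (fE t * fW t) <= 0.
    apply: mulr_le0_ge0; last by rewrite mulr_ge0 // ltW.
    rewrite /a in c'a; lra.
  have h3 : ia * (fE t * v) <= ia * (fE t * (C * expR (- c * (t - t0)))).
    by rewrite ler_pM2l // ler_pM2l.
  have h4 : K * (d * fF t) = C * ia * fF t by rewrite mulrA Kd.
  rewrite /dH /GRing.scale /=.
  have : fE t * (C * expR (- c * (t - t0))) = C * fF t by rewrite -EG; ring.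
  move: h1 h2 h3 h4; nra.
exists (fW t0 + K), c'; split => // t tt0.
have Ht := nonincr hH dH0 tt0.
have HtE : H t = fE t * fW t + K * fF t by [].
have Ht0 : H t0 = fW t0 + K.
  have -> : H t0 = fE t0 * fW t0 + K * fF t0 by [].
  by rewrite /fE /fF subrr !mulr0 expR0 mul1r mulr1.
have F0 : 0 <= fF t by exact: ltW (expR_gt0 _).
have E1 : expR (- c' * (t - t0)) * fE t = 1.
  by rewrite /fE -expRD mulNr addNr expR0.
have : fE t * fW t <= fW t0 + K.
  rewrite -Ht0; apply: le_trans Ht; rewrite HtE lerDl mulr_ge0 //.
have eP : 0 <= expR (- c' * (t - t0)) by exact: ltW (expR_gt0 _).
move=> h; rewrite mulrC.
have -> : w (P, S) t = expR (- c' * (t - t0)) * (fE t * fW t) by rewrite mulrA E1 mul1r.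
by rewrite ler_wpM2l.
Qed.

End Decay.
Section Cx. Variable R : realType.
Local Notation cRe := (@complex.Re R).
Local Notation cIm := (@complex.Im R).
Lemma cReM (u v : R[i]) : cRe (u * v) = cRe u * cRe v - cIm u * cIm v.
Proof. by case: u => a b; case: v => c d. Qed.
Lemma cImM (u v : R[i]) : cIm (u * v) = cRe u * cIm v + cIm u * cRe v.
Proof. by case: u => a b; case: v => c d. Qed.
Lemma cReD (u v : R[i]) : cRe (u + v) = cRe u + cRe v.
Proof. by case: u => a b; case: v => c d. Qed.
Lemma cImD (u v : R[i]) : cIm (u + v) = cIm u + cIm v.
Proof. by case: u => a b; case: v => c d. Qed.
Lemma cReN (u : R[i]) : cRe (- u) = - cRe u.
Proof. by case: u => a b. Qed.
Lemma cImN (u : R[i]) : cIm (- u) = - cIm u.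
Proof. by case: u => a b. Qed.
Lemma cRe0 : cRe 0 = 0. Proof. by []. Qed.
Lemma cIm0 : cIm 0 = 0. Proof. by []. Qed.
Lemma cRec (r : R) : cRe (r%:C%C) = r. Proof. by []. Qed.
Lemma cImc (r : R) : cIm (r%:C%C) = 0. Proof. by []. Qed.
Lemma cRe1 : cRe 1 = 1. Proof. by []. Qed.
Lemma cIm1 : cIm 1 = 0. Proof. by []. Qed.
Lemma cRe_lt0 (z : R[i]) : 'Re z < 0 -> cRe z < 0.
Proof. by rewrite -complexRe -ltcR. Qed.
End Cx.

Local Notation cRe := (@complex.Re _).
Local Notation cIm := (@complex.Im _).

Section Seq.
Variables (R : realType) (n : nat) (A : 'M[R]_n) (x : R -> 'cV[R]_n) (t0 : R).
Hypothesis hx : forall t : R, is_derive t 1 x (A *m x t).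

Fixpoint mulseq (s : seq R[i]) (PS : 'M[R]_n * 'M[R]_n) :=
  if s is z :: s' then mulseq s' (step A (cRe z) (cIm z) PS) else PS.

Lemma decay_seq s : (forall z, z \in s -> cRe z < 0) ->
  forall PS, Decay x t0 (mulseq s PS) -> Decay x t0 PS.
Proof.
elim: s => [|z s IH] hs PS //= hD.
apply: (step_decay hx (al := cRe z) (be := cIm z)); first by apply: hs; rewrite mem_head.
apply: IH => // z' hz'; apply: hs; by rewrite in_cons hz' orbT.
Qed.

Definition ReM (U : 'M[R[i]]_n) := map_mx cRe U.
Definition ImM (U : 'M[R[i]]_n) := map_mx cIm U.
Definition AC := map_mx (real_complex R) A.

Lemma cRe_sum (I : Type) (r : seq I) (P : pred I) (F : I -> R[i]) :
  cRe (\sum_(i <- r | P i) F i) = \sum_(i <- r | P i) cRe (F i).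
Proof. exact: (big_morph _ (@cReD R) (@cRe0 R)). Qed.
Lemma cIm_sum (I : Type) (r : seq I) (P : pred I) (F : I -> R[i]) :
  cIm (\sum_(i <- r | P i) F i) = \sum_(i <- r | P i) cIm (F i).
Proof. exact: (big_morph _ (@cImD R) (@cIm0 R)). Qed.

Lemma ReM_step U z : (ReM (U *m (AC - z%:M)), ImM (U *m (AC - z%:M))) =
  step A (cRe z) (cIm z) (ReM U, ImM U).
Proof.
rewrite mulmxBr mul_mx_scalar /step /ReM /ImM /AC /=.
congr pair; apply/matrixP => i j; rewrite !mxE.
  rewrite cReD cReN cRe_sum cReM.
  have -> : \sum_k cRe (U i k * (map_mx (real_complex R) A) k j) = \sum_k cRe (U i k) * A k j.
    by apply: eq_bigr => k _; rewrite mxE cReM cRec cImc mulr0 subr0.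
  have -> : \sum_k (map_mx cRe U) i k * A k j = \sum_k cRe (U i k) * A k j.
    by apply: eq_bigr => k _; rewrite mxE.
  ring.
rewrite cImD cImN cIm_sum cImM.
have -> : \sum_k cIm (U i k * (map_mx (real_complex R) A) k j) = \sum_k cIm (U i k) * A k j.
  by apply: eq_bigr => k _; rewrite mxE cImM cRec cImc mulr0 add0r.
have -> : \sum_k (map_mx cIm U) i k * A k j = \sum_k cIm (U i k) * A k j.
  by apply: eq_bigr => k _; rewrite mxE.
ring.
Qed.

Fixpoint Pi (s : seq R[i]) : 'M[R[i]]_n :=
  if s is z :: s' then (AC - z%:M) *m Pi s' else 1%:M.

Lemma mulseq_Pi s U : mulseq s (ReM U, ImM U) = (ReM (U *m Pi s), ImM (U *m Pi s)).
Proof.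
elim: s U => [|z s IH] U /=; first by rewrite mulmx1.
by rewrite -ReM_step IH !mulmxA.
Qed.

Lemma ReM1 : ReM 1%:M = 1%:M.
Proof. apply/matrixP => i j; rewrite !mxE; by case: eqP. Qed.
Lemma ImM1 : ImM 1%:M = 0.
Proof. apply/matrixP => i j; rewrite !mxE; by case: eqP. Qed.
Lemma ReM0 : ReM 0 = 0.
Proof. apply/matrixP => i j; by rewrite !mxE. Qed.
Lemma ImM0 : ImM 0 = 0.
Proof. apply/matrixP => i j; by rewrite !mxE. Qed.

End Seq.

Lemma Pi_horner (R : realType) (n' : nat) (A : 'M[R]_n'.+1) s :
  Pi A s = horner_mx (AC A) (\prod_(z <- s) ('X - z%:P)).
Proof.
elim: s => [|z s IH] /=; first by rewrite big_nil -polyC1 horner_mx_C. rewrite big_cons rmorphM rmorphB /= horner_mx_X horner_mx_C -IH. by [].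
Qed.

Lemma decay_x (R : realType) (n : nat) (A : 'M[R]_n) (x : R -> 'cV[R]_n) (t0 : R) :
  (forall t : R, is_derive t 1 x (A *m x t)) -> hurwitz A -> Decay x t0 (1%:M, 0).
Proof.
case: n A x => [|n'] A x hx H.
  exists 0, 1; split => // t _; rewrite mul0r /w qformE bilE big_ord0 //.
have [rs Ers] := closed_field_poly_normal (map_poly (real_complex R) (char_poly A)).
have mon : lead_coef (map_poly (real_complex R) (char_poly A)) = 1.
  apply/monicP; rewrite map_monic; exact: char_poly_monic.
rewrite mon scale1r in Ers.
have hroots z : z \in rs -> cRe z < 0.
  move=> zr; apply: cRe_lt0; apply: H; by rewrite Ers root_prod_XsubC.
have hPi : Pi A rs = 0.
  by rewrite Pi_horner -Ers map_char_poly Cayley_Hamilton.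
have hm := mulseq_Pi A rs 1%:M.
rewrite mul1mx hPi ReM1 ImM1 ReM0 ImM0 in hm.
apply: (decay_seq hx hroots); rewrite hm.
exists 0, 1; split => // t _.
by rewrite /w /Gp /= mulmx0 addr0 qformE bilE mul0r big1 // => i _; rewrite big1 // => j _; rewrite mxE mulr0 mul0r.
Qed.

Lemma sq_le_sum (R : realType) (n : nat) (v : 'cV[R]_n) i :
  v i 0 ^+ 2 <= \sum_(k < n) v k 0 ^+ 2.
Proof.
rewrite (bigD1 i) //= lerDl; apply: sumr_ge0 => k _; exact: sqr_ge0.
Qed.

Lemma qform_bound (R : realType) (n : nat) (M : 'M[R]_n) (v : 'cV[R]_n) :
  `|qform M v| <= (\sum_(i < n) \sum_(j < n) `|M i j|) * qform (Gp 1%:M 0) v.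
Proof.
have -> : qform (Gp 1%:M 0) v = \sum_(k < n) v k 0 ^+ 2.
  rewrite qform_Gp; apply: eq_bigr => k _; by rewrite mul1mx mul0mx mxE expr0n /= addr0.
set N := \sum_(k < n) v k 0 ^+ 2.
rewrite qformE bilE mulr_suml; apply: le_trans (ler_norm_sum _ _ _) _.
apply: ler_sum => i _; rewrite mulr_suml; apply: le_trans (ler_norm_sum _ _ _) _.
apply: ler_sum => j _.
have hi := sq_le_sum v i; have hj := sq_le_sum v j.
have e1 : `|v i 0| ^+ 2 = v i 0 ^+ 2 by rewrite real_normK // num_real.
have e2 : `|v j 0| ^+ 2 = v j 0 ^+ 2 by rewrite real_normK // num_real.
have hij : `|v i 0| * `|v j 0| <= N.
  have := sqr_ge0 (`|v i 0| - `|v j 0|); rewrite /N in hi hj *; nra.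
rewrite !normrM -[X in X <= _]mulrA [X in X <= _]mulrCA.
apply: ler_wpM2l => //; exact: normr_ge0.
Qed.

Section Improper.
Variable R : realType.
Local Notation mu := (@lebesgue_measure R).
Local Open Scope classical_set_scope.

Lemma exp_bound_cvg (u : R -> R) (C c t0 : R) : 0 < c -> 0 <= C ->
  (forall t, t0 <= t -> `|u t| <= C * expR (- c * (t - t0))) ->
  u t @[t --> +oo] --> 0.
Proof.
move=> c0 C0 hb; apply/cvgrPdist_le => e e0.
near=> t.
rewrite sub0r normrN; apply: le_trans (hb t _) _.
  by near: t; apply: nbhs_pinfty_ge; exact: num_real.
have ht : t0 + C / (e * c) <= t by near: t; apply: nbhs_pinfty_ge; exact: num_real.
have ec0 : 0 < e * c by rewrite mulr_gt0.
have h1 : C <= (t - t0) * (e * c).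
  by rewrite -ler_pdivrMr // lerBrDl.
rewrite mulNr expRN ler_pdivrMr ?expR_gt0 //.
apply: le_trans (ler_wpM2l (ltW e0) (expR_ge1Dx _)).
nra.
Unshelve. all: end_near.
Qed.

Lemma improper (f g : R -> R) (C1 C2 c t0 : R) : 0 < c -> 0 <= C1 -> 0 <= C2 ->
  continuous f -> (forall t, is_derive t (1:R) g (f t)) ->
  (forall t, t0 <= t -> `|f t| <= C1 * expR (- c * (t - t0))) ->
  (forall t, t0 <= t -> `|g t| <= C2 * expR (- c * (t - t0))) ->
  (\int[mu]_(t in `[t0, +oo[) (f t)%:E = (- g t0)%:E)%E.
Proof.
move=> c0 C10 C20 cf dg hf hg.
pose e t := expR (- c * (t - t0)).
have e0 t : 0 < e t by exact: expR_gt0.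
pose h t := C1 * e t.
pose Hh t := - (C1 / c) * e t.
have dh t : is_derive t (1:R) h (C1 * (- c * e t)).
  exact: (is_deriveZ C1 (dexp (- c) t0 t)).
have dHh t : is_derive t (1:R) Hh (h t).
  have H : is_derive t (1:R) Hh (- (C1 / c) *: (- c * e t)) :=
    is_deriveZ (- (C1 / c)) (dexp (- c) t0 t).
  apply: (is_derive_eq H).
  rewrite /h /e /GRing.scale /=. have cn0 : c != 0 by rewrite gt_eqF. field. by [].
pose F t := g t + Hh t.
have dF t : is_derive t (1:R) F (f t + h t).
  exact: (is_deriveD (dg t) (dHh t)).
have ch : continuous h := continuous_of_derive dh.
have cfh : continuous (fun t => f t + h t).
  by move=> t; apply: continuousD; [exact: cf | exact: ch].
have hHh t : t0 <= t -> `|Hh t| <= (C1 / c) * e t.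
  move=> _; rewrite /Hh normrM normrN (ger0_norm (ltW (e0 t))) ger0_norm //; apply: divr_ge0 => //; exact: ltW.
have I1 : (\int[mu]_(t in `[t0, +oo[) ((f t + h t))%:E = 0%:E - (F t0)%:E)%E.
  apply: ge0_continuous_FTC2y.
  - move=> t tt0; have := hf t tt0; rewrite ler_norml /h /e; lra.
  - exact: continuous_subspaceT.
  - apply: (@exp_bound_cvg _ (C2 + C1 / c) c t0) => //.
      by rewrite addr_ge0 // divr_ge0 // ltW.
    move=> t tt0; rewrite /F; apply: le_trans (ler_normD _ _) _.
    rewrite mulrDl; apply: lerD; [exact: hg | exact: hHh].
  - move=> t _; have hh := dF t; exact: ex_derive.
  - apply: cvg_at_right_filter; exact: (continuous_of_derive dF).
  - move=> t _; rewrite derive1E; exact: derive_val.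
have I2 : (\int[mu]_(t in `[t0, +oo[) (h t)%:E = 0%:E - (Hh t0)%:E)%E.
  apply: ge0_continuous_FTC2y.
  - move=> t _; rewrite /h; apply: mulr_ge0 => //; exact: ltW (e0 t).
  - exact: continuous_subspaceT.
  - apply: (@exp_bound_cvg _ (C1 / c) c t0) => //.
      by rewrite divr_ge0 // ltW.
  - move=> t _; have hh := dHh t; exact: ex_derive.
  - apply: cvg_at_right_filter; exact: (continuous_of_derive dHh).
  - move=> t _; rewrite derive1E; exact: derive_val.
have mD : measurable (`[t0, +oo[%classic : set R) by exact: measurable_itv.
have int_of (k : R -> R) : continuous k -> (forall t, t0 <= t -> 0 <= k t) ->
    (\int[mu]_(t in `[t0, +oo[) (k t)%:E < +oo)%E ->
    mu.-integrable `[t0, +oo[ (fun t => (k t)%:E).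
  move=> ck k0 kfin; apply/integrableP; split.
    apply/measurable_EFinP; apply: measurable_funTS; exact: continuous_measurable_fun.
  have -> : (\int[mu]_(t in `[t0, +oo[) `|(k t)%:E|)%E = (\int[mu]_(t in `[t0, +oo[) (k t)%:E)%E.
    apply: eq_integral => t; rewrite inE /= in_itv /= andbT => tt0.
    by rewrite ger0_norm // k0.
  exact: kfin.
have int1 : mu.-integrable `[t0, +oo[ (fun t => (f t + h t)%:E).
  apply: int_of => //; last by rewrite I1 ltry.
  move=> t tt0; have := hf t tt0; rewrite ler_norml /h /e; lra.
have int2 : mu.-integrable `[t0, +oo[ (fun t => (h t)%:E).
  apply: int_of => //; last by rewrite I2 ltry.
  move=> t _; rewrite /h; apply: mulr_ge0 => //; exact: ltW (e0 t).
have -> : (fun t => (f t)%:E) = (fun t => (f t + h t)%:E - (h t)%:E)%E.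
  by apply/funext => t; rewrite -EFinB addrK.
rewrite integralB // I1 I2 -!EFinB; congr EFin; rewrite /F; ring.
Qed.

End Improper.

Lemma Jeq_val (R : realType) (n : nat) (A Q Ystar : 'M[R]_n)
  (x : R -> 'cV[R]_n) (t0 : R) (x0 : 'cV[R]_n) :
  hurwitz A -> x t0 = x0 -> (forall t : R, is_derive t 1 x (A *m x t)) ->
  A^T *m Ystar + Ystar *m A + Q = 0 ->
  forall Y : 'M[R]_n, J_eq A Q Y x t0 = (qform Ystar x0)%:E.
Proof.
move=> hA hx0 hx hY Y.
have hQ : Q = - (A^T *m Ystar + Ystar *m A).
  by apply/eqP; rewrite -addr_eq0 addrC hY.
pose M := A^T *m Y + Y *m A + Q.
pose f t := qform M (x t).
pose g t := qform (Y - Ystar) (x t).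
have dg t : is_derive t (1:R) g (f t).
  apply: (is_derive_eq (dqform hx (Y - Ystar) t)).
  rewrite /f /M hQ qformE !bilD !bilN !bilD !bil_trl !bil_mr; ring.
have cf : continuous f := continuous_of_derive (dqform hx M).
have [C [c [c0 hC]]] := decay_x t0 hx hA.
have C0 : 0 <= C.
  have := hC t0 (lexx _); rewrite subrr mulr0 expR0 mulr1.
  by apply: le_trans; exact: Gp_ge0.
pose KM := \sum_(i < n) \sum_(j < n) `|M i j|.
pose KG := \sum_(i < n) \sum_(j < n) `|(Y - Ystar) i j|.
have KM0 : 0 <= KM by apply: sumr_ge0 => i _; apply: sumr_ge0 => j _.
have KG0 : 0 <= KG by apply: sumr_ge0 => i _; apply: sumr_ge0 => j _.
have hI := @improper R f g (KM * C) (KG * C) c t0 c0 (mulr_ge0 KM0 C0) (mulr_ge0 KG0 C0) cf dg.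
rewrite /J_eq -/f.
rewrite (_ : (\int[lebesgue_measure]_(t in `[t0, +oo[%classic) (f t)%:E)%E = (- g t0)%:E).
  rewrite -EFinD hx0 /g hx0; congr EFin; rewrite !qformE bilD bilN; ring.
apply: hI => t tt0.
  apply: le_trans (qform_bound M (x t)) _; rewrite -mulrA ler_wpM2l //; exact: hC.
apply: le_trans (qform_bound (Y - Ystar) (x t)) _; rewrite -mulrA ler_wpM2l //; exact: hC.
Qed.

Theorem theorem4 (R : realType) (n : nat) (A Q Ystar : 'M[R]_n)
  (x : R -> 'cV[R]_n) (t0 : R) (x0 : 'cV[R]_n) :
  hurwitz A -> psd Q ->
  x t0 = x0 -> (forall t : R, is_derive t 1 x (A *m x t)) ->
  A^T *m Ystar + Ystar *m A + Q = 0 ->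
  (forall Y : 'M[R]_n, psd Y -> (J_eq A Q Y x t0 >= (qform Ystar x0)%:E)%E) /\
  (t0 = 0 -> forall Y : 'M[R]_n, J_eq A Q Y x t0 = (qform Ystar x0)%:E).
Proof.
move=> hA _ hx0 hx hY; split.
  by move=> Y _; rewrite (Jeq_val hA hx0 hx hY Y).
by move=> _ Y; exact: (Jeq_val hA hx0 hx hY Y).
Qed.
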